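(* Let $\mathcal{R}_1$ be the family of all south-west quadrants and $\mathcal{R}_2 = \{\{(x,y) \in \mathbb{R}^2 : a \leq x+y \leq b\} : a,b \in \mathbb{R}\}$ the family of all diagonal strips of slope $-1$. Then for $\mathcal{R} = \mathcal{R}_1 \cup \mathcal{R}_2$ we have $m_{\mathcal{R}}(2) = \infty$.
   Context: South-west quadrants: $\{\{(x,y) : x \leq a,\ y \leq b\} : a,b \in \mathbb{R}\}$. For finite $V \subset \mathbb{R}^2$, $\mathcal{H}(V,\mathcal{R},m)$ is the hypergraph on $V$ whose hyperedges are the sets $V \cap R$, $R \in \mathcal{R}$, of size exactly $m$. A coloring is polychromatic if every hyperedge contains each color. Point sets are in general position (pairwise distinct $x$-coordinates, $y$-coordinates and values $x+y$). $m_{\mathcal{R}}(k)$ is the smallest $m$ such that for every finite $V$ in general position $\mathcal{H}(V,\mathcal{R},m)$ admits a polychromatic $k$-coloring, and $\infty$ if no such $m$ exists. *)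

(* Defs.v *)
From Stdlib Require Import Reals.
From mathcomp Require Import all_boot all_order all_algebra.
From mathcomp Require Import Rstruct.
Set Implicit Arguments. Unset Strict Implicit. Unset Printing Implicit Defensive.
Import Order.TTheory GRing.Theory Num.Theory.
Local Open Scope ring_scope.

Definition point := (R * R)%type.

Definition region := pred point.
Definition family := region -> Prop.

Definition sw_quadrant (a b : R) : region := fun p => (p.1 <= a) && (p.2 <= b).
Definition SW_quadrants : family :=
  fun Q => exists a b : R, forall p, Q p = sw_quadrant a b p.

Definition diag_strip (a b : R) : region :=
  fun p => (a <= p.1 + p.2) && (p.1 + p.2 <= b).
Definition diag_strips : family :=
  fun Q => exists a b : R, forall p, Q p = diag_strip a b p.

Definition family_union (F1 F2 : family) : family := fun Q => F1 Q \/ F2 Q.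

Definition general_position (V : seq point) : Prop :=
  forall p q, p \in V -> q \in V -> p <> q ->
    [/\ p.1 <> q.1, p.2 <> q.2 & p.1 + p.2 <> q.1 + q.2].

(* the hyperedge V ∩ Q (V duplicate-free) *)
Definition hedge (V : seq point) (Q : region) : seq point := [seq v <- V | Q v].

Definition polychromatic (F : family) (V : seq point) (m k : nat)
    (c : point -> 'I_k) : Prop :=
  forall Q, F Q -> size (hedge V Q) = m ->
    forall i : 'I_k, exists2 v, v \in hedge V Q & c v = i.

Definition m_works (F : family) (k m : nat) : Prop :=
  forall V : seq point, uniq V -> general_position V ->
    exists c : point -> 'I_k, @polychromatic F V m k c.

Definition m_infinite (F : family) (k : nat) : Prop := ~ exists m : nat, m_works F k m.

(* Main.v *)
Require Import Defs.
From Stdlib Require Import Reals.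
From mathcomp Require Import all_boot all_order all_algebra.
From mathcomp Require Import Rstruct lra.
Import Order.TTheory GRing.Theory Num.Theory.
Local Open Scope ring_scope.
Set Warnings "-notation-overridden,-ambiguous-paths".


Definition inb (W : R) (p : point) : Prop :=
  -W < p.1 /\ p.1 < W /\ -W < p.2 /\ p.2 < W.

Definition Inv (m d : nat) (T : seq point) : Prop :=
  uniq T /\ general_position T /\ exists W : R, 0 < W /\
  (forall p, p \in T -> inb W p) /\
  forall c : point -> 'I_2,
    (forall lo hi, size (hedge T (diag_strip lo hi)) = m ->
       forall col, exists2 v, v \in hedge T (diag_strip lo hi) & c v = col) ->
    forall col : 'I_2, exists p, [/\ inb W p,
       size (hedge T (sw_quadrant p.1 p.2)) = d &
       forall v, v \in hedge T (sw_quadrant p.1 p.2) -> c v = col].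

Lemma size_mem (s1 s2 : seq point) : uniq s1 -> uniq s2 ->
  (forall x, (x \in s1) = (x \in s2)) -> size s1 = size s2.
Proof. by move=> u1 u2 e; apply: perm_size; apply: uniq_perm. Qed.

Lemma nat_lt_mul (x : R) (i j : nat) : 0 <= x -> (i < j)%N ->
  i%:R * x + x <= j%:R * x.
Proof.
move=> x0 ij. rewrite -{2}(mul1r x) -mulrDl. apply: ler_wpM2r => //.
by rewrite natr1 ler_nat.
Qed.

Lemma nat_ge0 (x : R) (i : nat) : 0 <= x -> 0 <= i%:R * x.
Proof. by move=> x0; apply: mulr_ge0. Qed.
Arguments nat_ge0 {x} i.
Arguments nat_lt_mul {x i j}.

Lemma Inv0 m : Inv m 0 [::].
Proof.
split => //; split; first by move=> p q; rewrite in_nil.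
exists 1; split; first exact: ltr01.
split; first by move=> p; rewrite in_nil.
move=> c _ col; exists (0, 0); split => //.
rewrite /inb /=; lra.
Qed.

Ltac clra := first [exfalso; lra | lra].

Lemma step m d T : (0 < m)%N -> Inv m d T -> exists T', Inv m d.+1 T'.
Proof.
move=> m0 [uT [gpT [W [W0 [bT HT]]]]].
have [S hS] : exists S : R, S = 4 * W + 1 by eexists.
have [D hD] : exists D : R, D = S + 2 * W + m%:R * S + 1 by eexists.
have [K hK] : exists K : R, K = D + S by eexists.
have S0 : 0 <= S by clra.
have D0 : 0 <= D by have := nat_ge0 m S0; clra.
have K0 : 0 <= K by clra.
have hmS : S <= m%:R * S.
  by have := nat_lt_mul S0 m0; rewrite mul0r add0r.
have F : forall i : nat, [/\ 0 <= i%:R * K, 0 <= i%:R * D, 0 <= i%:R * S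
   & i%:R * K = i%:R * D + i%:R * S].
  move=> i; split; try exact: nat_ge0.
  by rewrite hK mulrDr.
have G : forall i : nat, (i < m)%N -> [/\ i%:R * K + K <= m%:R * K,
   i%:R * D + D <= m%:R * D & i%:R * S + S <= m%:R * S].
  by move=> i hi; split; apply: nat_lt_mul.
have H : forall i j : nat, (i < j)%N -> [/\ i%:R * K + K <= j%:R * K,
   i%:R * D + D <= j%:R * D & i%:R * S + S <= j%:R * S].
  by move=> i j hi; split; apply: nat_lt_mul.
pose root := fun i : nat => (i%:R * K - W - m%:R * S, - (i%:R * D) - W - m%:R * S) : point.
pose sh := fun (i : nat) (q : point) => (q.1 + i%:R * K, q.2 - i%:R * D) : point.
pose roots := [seq root i | i <- iota 0 m].
pose T' := roots ++ [seq sh i q | i <- iota 0 m, q <- T].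
have memT' : forall v, v \in T' -> (exists2 i, (i < m)%N & v = root i) \/
    (exists i q, [/\ (i < m)%N, q \in T & v = sh i q]).
  move=> v; rewrite mem_cat => /orP [/mapP [i hi ->] | /allpairsP [[i q] [hi hq ->]]].
    by left; exists i => //; move: hi; rewrite mem_iota add0n => /andP [].
  by right; exists i, q; split => //; move: hi; rewrite mem_iota add0n => /andP [].
have memroots : forall v, (v \in roots) -> exists2 i, (i < m)%N & v = root i.
  move=> v /mapP [i hi ->].
  by exists i => //; move: hi; rewrite mem_iota add0n => /andP [].
have rootin : forall i, (i < m)%N -> root i \in roots.
  by move=> i hi; apply/mapP; exists i => //; rewrite mem_iota add0n.
have rootin' : forall i, (i < m)%N -> root i \in T'.
  by move=> i hi; rewrite mem_cat rootin.
have shin : forall i q, (i < m)%N -> q \in T -> sh i q \in T'.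
  move=> i q hi hq; rewrite mem_cat; apply/orP; right.
  by apply/allpairsP; exists (i, q); split => //; rewrite mem_iota add0n.
have shinj : forall i, injective (sh i).
  move=> i [x1 x2] [y1 y2] [e1 e2] /=.
  by congr (_, _); clra.
have RC : forall i j q, (i < m)%N -> q \in T ->
   [/\ (root i).1 <> (sh j q).1, (root i).2 <> (sh j q).2 &
       (root i).1 + (root i).2 <> (sh j q).1 + (sh j q).2].
  move=> i j q him hq; have [q1 [q2 [q3 q4]]] := bT q hq.
  case: (G i him) => gi1 gi2 gi3.
  case: (F i) => fi1 fi2 fi3 fi4; case: (F j) => fj1 fj2 fj3 fj4.
  rewrite /root /sh /=.
  case: (ssrnat.ltngtP i j) => [ij|ji|<-].
  - case: (H i j ij) => h1 h2 h3; split => e; clra.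
  - case: (H j i ji) => h1 h2 h3; split => e; clra.
  - split => e; clra.
have uroots : uniq roots.
  rewrite map_inj_uniq ?iota_uniq //.
  move=> i j; rewrite /root => -[e1 _].
  case: (F i) => fi1 fi2 fi3 fi4; case: (F j) => fj1 fj2 fj3 fj4.
  case: (ssrnat.ltngtP i j) => [ij|ji|//].
  - case: (H i j ij) => h1 h2 h3; exfalso; lra.
  - case: (H j i ji) => h1 h2 h3; exfalso; lra.
have uT' : uniq T'.
  rewrite cat_uniq uroots /=; apply/andP; split.
    apply/hasPn => v /allpairsP [[j q] [hj hq ->]] /=.
    apply/negP => /memroots [i him e].
    by case: (RC i j q him hq) => e1 _ _; apply: e1; rewrite -e.
  apply: allpairs_uniq; [exact: iota_uniq | exact: uT | ].
  move=> [i q] [j q'] /allpairsP [[i0 q0] [_ hq0 [-> ->]]]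
     /allpairsP [[j0 q0'] [_ hq0' [-> ->]]] /=.
  move=> e.
  have [x1 [x2 [x3 x4]]] := bT q0 hq0; have [y1 [y2 [y3 y4]]] := bT q0' hq0'.
  case: (F i0) => fi1 fi2 fi3 fi4; case: (F j0) => fj1 fj2 fj3 fj4.
  move: e; rewrite /sh => -[e1 e2].
  case: (ssrnat.ltngtP i0 j0) => [ij|ji|ij].
  - case: (H i0 j0 ij) => h1 h2 h3; clra.
  - case: (H j0 i0 ji) => h1 h2 h3; clra.
  - subst j0; congr (_, _); apply: (shinj i0); rewrite /sh; congr (_, _); clra.
have gpT' : general_position T'.
  move=> p q /memT' [[i hi ->]|[i [x [hi hx ->]]]] /memT' [[j hj ->]|[j [y [hj hy ->]]]] neq.
  - case: (F i) => fi1 fi2 fi3 fi4; case: (F j) => fj1 fj2 fj3 fj4.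
    rewrite /root /=.
    case: (ssrnat.ltngtP i j) => [ij|ji|ij].
    + case: (H i j ij) => h1 h2 h3; split => e; clra.
    + case: (H j i ji) => h1 h2 h3; split => e; clra.
    + by subst j.
  - exact: RC.
  - case: (RC j i x hj hx) => e1 e2 e3; split => e.
    + by apply: e1.
    + by apply: e2.
    + by apply: e3.
  - have [x1 [x2 [x3 x4]]] := bT x hx; have [y1 [y2 [y3 y4]]] := bT y hy.
    case: (F i) => fi1 fi2 fi3 fi4; case: (F j) => fj1 fj2 fj3 fj4.
    rewrite /sh /=.
    case: (ssrnat.ltngtP i j) => [ij|ji|ij].
    + case: (H i j ij) => h1 h2 h3; split => e; clra.
    + case: (H j i ji) => h1 h2 h3; split => e; clra.
    + subst j.
      have nxy : x <> y by move=> exy; apply: neq; rewrite exy.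
      case: (gpT x y hx hy nxy) => g1 g2 g3.
      split => e; [apply: g1 | apply: g2 | apply: g3]; clra.
have [W' hW'] : exists W' : R, W' = m%:R * K + m%:R * D + W + m%:R * S + 1 by eexists.
exists T'; split; first exact: uT'.
split; first exact: gpT'.
exists W'; split.
  have := nat_ge0 m K0; have := nat_ge0 m D0; clra.
split.
  move=> v /memT' [[i hi ->]|[i [x [hi hx ->]]]].
  - case: (F i) => fi1 fi2 fi3 fi4; case: (G i hi) => g1 g2 g3.
    rewrite /inb /root /=; clra.
  - have [x1 [x2 [x3 x4]]] := bT x hx.
    case: (F i) => fi1 fi2 fi3 fi4; case: (G i hi) => g1 g2 g3.
    rewrite /inb /sh /=; clra.
move=> c Hc col.
have [lo hlo] : exists lo : R, lo = - (2 * W) - 2 * (m%:R * S) - 1 by eexists.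
have [hi hhi] : exists hi : R, hi = - (2 * W) - m%:R * S by eexists.
have memrb : forall v, (v \in hedge T' (diag_strip lo hi)) = (v \in roots).
  move=> v; rewrite mem_filter; apply/idP/idP.
    move=> /andP [hs /memT' [[i hi' ev]|[i [x [hi' hx ev]]]]]; subst v; first exact: rootin.
    have [x1 [x2 [x3 x4]]] := bT x hx.
    case: (F i) => fi1 fi2 fi3 fi4.
    move: hs; rewrite /diag_strip /sh /= => /andP [s1 s2]; clra.
  move=> /memroots [i hi' ->]; rewrite rootin' // andbT.
  case: (F i) => fi1 fi2 fi3 fi4; case: (G i hi') => g1 g2 g3.
  rewrite /diag_strip /root /=; apply/andP; split; clra.
have szrb : size (hedge T' (diag_strip lo hi)) = m.
  rewrite (@size_mem _ roots) ?filter_uniq // ?size_map ?size_iota //.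
have [v hv hcv] := Hc lo hi szrb col.
rewrite memrb in hv; case/memroots: hv => i hi' ev; subst v.
pose ci := fun q => c (sh i q).
have Hci : forall lo0 hi0, size (hedge T (diag_strip lo0 hi0)) = m ->
    forall col0, exists2 v, v \in hedge T (diag_strip lo0 hi0) & ci v = col0.
  move=> lo0 hi0 hsz col0.
  have [l1 [l1a l1b l1c]] : exists l1 : R, [/\ lo0 <= l1, - (2 * W) <= l1 &
     forall z, lo0 <= z -> - (2 * W) <= z -> l1 <= z].
    exists (Order.max lo0 (- (2 * W))); split; first by rewrite le_max lexx.
      by rewrite le_max lexx orbT.
    by move=> z a b; rewrite ge_max a b.
  have [h1 [h1a h1b h1c]] : exists h1 : R, [/\ h1 <= hi0, h1 <= 2 * W &
     forall z, z <= hi0 -> z <= 2 * W -> z <= h1].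
    exists (Order.min hi0 (2 * W)); split; first by rewrite ge_min lexx.
      by rewrite ge_min lexx orbT.
    by move=> z a b; rewrite le_min a b.
  have [lo2 hlo2] : exists lo2 : R, lo2 = l1 + i%:R * S by eexists.
  have [hi2 hhi2] : exists hi2 : R, hi2 = h1 + i%:R * S by eexists.
  have memc : forall v, (v \in hedge T' (diag_strip lo2 hi2)) =
      (v \in map (sh i) (hedge T (diag_strip lo0 hi0))).
    move=> v; rewrite mem_filter; apply/idP/idP.
      move=> /andP [hs /memT' [[j hj ev]|[j [x [hj hx ev]]]]]; subst v.
        case: (F j) => fj1 fj2 fj3 fj4; case: (F i) => fi1 fi2 fi3 fi4.
        case: (G j hj) => g1 g2 g3.
        move: hs; rewrite /diag_strip /root /= => /andP [s1 s2]; clra.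
      have [x1 [x2 [x3 x4]]] := bT x hx.
      case: (F j) => fj1 fj2 fj3 fj4; case: (F i) => fi1 fi2 fi3 fi4.
      move: hs; rewrite /diag_strip /sh /= => /andP [s1 s2].
      case: (ssrnat.ltngtP i j) => [ij|ji|ij].
      + case: (H i j ij) => k1 k2 k3; clra.
      + case: (H j i ji) => k1 k2 k3; clra.
      + subst j; apply/mapP; exists x => //.
        rewrite mem_filter hx andbT /diag_strip; apply/andP; split; clra.
    move=> /mapP [x]; rewrite mem_filter => /andP [hs hx] ->.
    rewrite shin // andbT.
    have [x1 [x2 [x3 x4]]] := bT x hx.
    case: (F i) => fi1 fi2 fi3 fi4.
    move: hs; rewrite /diag_strip /sh /= => /andP [s1 s2].
    have := l1c (x.1 + x.2) s1 ltac:(lra).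
    have := h1c (x.1 + x.2) s2 ltac:(lra).
    move=> k1 k2; apply/andP; split; clra.
  have sz' : size (hedge T' (diag_strip lo2 hi2)) = m.
    rewrite (@size_mem _ (map (sh i) (hedge T (diag_strip lo0 hi0)))) //.
    - by rewrite size_map.
    - exact: filter_uniq.
    - by rewrite (map_inj_uniq (shinj i)) filter_uniq.
  have [v hv hcv'] := Hc lo2 hi2 sz' col0.
  rewrite memc in hv; case/mapP: hv => x hx ev; subst v.
  by exists x.
have [p [hp hsz hcol]] := HT ci Hci col.
have [p1 [p2 [p3 p4]]] := hp.
have memq : forall v, (v \in hedge T' (sw_quadrant (sh i p).1 (sh i p).2)) =
    (v \in root i :: map (sh i) (hedge T (sw_quadrant p.1 p.2))).
  move=> v; rewrite mem_filter in_cons; apply/idP/idP.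
    move=> /andP [hs /memT' [[j hj ev]|[j [x [hj hx ev]]]]]; subst v.
      case: (F j) => fj1 fj2 fj3 fj4; case: (F i) => fi1 fi2 fi3 fi4.
      move: hs; rewrite /sw_quadrant /root /sh /= => /andP [s1 s2].
      case: (ssrnat.ltngtP i j) => [ij|ji|ij].
      + case: (H i j ij) => k1 k2 k3; clra.
      + case: (H j i ji) => k1 k2 k3; clra.
      + by subst j; rewrite eqxx.
    have [x1 [x2 [x3 x4]]] := bT x hx.
    case: (F j) => fj1 fj2 fj3 fj4; case: (F i) => fi1 fi2 fi3 fi4.
    move: hs; rewrite /sw_quadrant /sh /= => /andP [s1 s2].
    case: (ssrnat.ltngtP i j) => [ij|ji|ij].
    + case: (H i j ij) => k1 k2 k3; clra.
    + case: (H j i ji) => k1 k2 k3; clra.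
    + subst j; apply/orP; right; apply/mapP; exists x => //.
      rewrite mem_filter hx andbT /sw_quadrant; apply/andP; split; clra.
  case/orP => [/eqP -> | /mapP [x]].
    rewrite rootin' // andbT.
    case: (F i) => fi1 fi2 fi3 fi4.
    rewrite /sw_quadrant /root /sh /=; apply/andP; split; clra.
  rewrite mem_filter => /andP [hs hx] ->.
  rewrite shin // andbT.
  move: hs; rewrite /sw_quadrant /sh /= => /andP [s1 s2].
  apply/andP; split; clra.
exists (sh i p); split.
- case: (F i) => fi1 fi2 fi3 fi4; case: (G i hi') => g1 g2 g3.
  rewrite /inb /sh /=; clra.
- rewrite (@size_mem _ (root i :: map (sh i) (hedge T (sw_quadrant p.1 p.2)))) //.
  + by rewrite /= size_map hsz.
  + exact: filter_uniq.
  + rewrite cons_uniq (map_inj_uniq (shinj i)) filter_uniq // andbT.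
    apply/mapP => -[x]; rewrite mem_filter => /andP [_ hx] e.
    by case: (RC i i x hi' hx) => e1 _ _; apply: e1; rewrite e.
- move=> v; rewrite memq in_cons => /orP [/eqP -> // | /mapP [x hx ->]].
  exact: hcol.
Qed.

Lemma build m : forall d, (d <= m)%N -> exists T, Inv m d T.
Proof.
elim => [|d IH] hd; first by exists [::]; exact: Inv0.
have [T hT] := IH (ltnW hd).
exact: (@step m d T (leq_ltn_trans (leq0n d) hd) hT).
Qed.

Theorem corollary7 : m_infinite (family_union SW_quadrants diag_strips) 2.
Proof.
move=> [m Hm].
have [T [uT [gpT [W [_ [_ HT]]]]]] := @build m m (leqnn m).
have [c Hc] := Hm T uT gpT.
have Hs : forall lo hi, size (hedge T (diag_strip lo hi)) = m ->
    forall col, exists2 v, v \in hedge T (diag_strip lo hi) & c v = col.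
  by move=> lo hi hs col; apply: Hc => //; right; exists lo, hi.
have [p [_ hsz hcol]] := HT c Hs (@Ordinal 2 0 isT).
have [v hv hcv] := Hc (sw_quadrant p.1 p.2) ltac:(by left; exists p.1, p.2) hsz
  (@Ordinal 2 1 isT).
by rewrite hcol in hcv.
Qed.
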